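(* Let $\kappa$ be a regular infinite cardinal and $\mu$ a singular cardinal with $\mathrm{cf}(\mu)=\kappa$. The spaces $({}^{\mu}2,\mu)$ and $({}^{\mu}\kappa,\mu)$ are homeomorphic.
   Context: For ordinals $\delta,\rho$, ${}^{\delta}\rho$ is the set of functions $\delta\to\rho$; for a partial function $s\colon\delta\rightharpoonup\rho$, $[s]=\{f\in{}^{\delta}\rho: s\subseteq f\}$. The ${<}\mu$-box topology on ${}^{\delta}\rho$ has base $\{[s]: |\mathrm{dom}(s)|<\mu\}$; $(X,\mu)$ denotes $X$ with this topology. *)

(* Defs.v *)
From mathcomp Require Import all_boot.
From mathcomp Require Import boolp classical_sets functions cardinality.
Set Implicit Arguments. Unset Strict Implicit. Unset Printing Implicit Defensive.
Local Open Scope classical_set_scope.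
Local Open Scope card_scope.

Definition card_lt T U (A : set T) (B : set U) : Prop := (A #<= B) /\ ~ (B #<= A).

(* An ordinal is represented by a type T with a strict well-order lt. *)
Definition strict_well_order T (lt : T -> T -> Prop) : Prop :=
  (forall x, ~ lt x x) /\
  (forall x y z, lt x y -> lt y z -> lt x z) /\
  (forall x y, lt x y \/ x = y \/ lt y x) /\
  well_founded lt.

(* (T, lt) is an initial ordinal, i.e. a cardinal: a well-order each of whose
   proper initial segments has strictly smaller cardinality than T. *)
Definition is_cardinal T (lt : T -> T -> Prop) : Prop :=
  strict_well_order lt /\ forall x, card_lt [set y | lt y x] [set: T].

Definition cofinal T (lt : T -> T -> Prop) (S : set T) : Prop :=
  forall x, exists2 y, S y & ~ lt y x.

Definition cf_is T (lt : T -> T -> Prop) K : Prop :=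
  (exists2 S, cofinal lt S & S #= [set: K]) /\
  (forall S, cofinal lt S -> [set: K] #<= S).

Definition regular_infinite_cardinal K (lt : K -> K -> Prop) : Prop :=
  is_cardinal lt /\ infinite_set [set: K] /\ cf_is lt K.

Definition singular_cardinal M (lt : M -> M -> Prop) : Prop :=
  is_cardinal lt /\ infinite_set [set: M] /\
  exists K, cf_is lt K /\ card_lt [set: K] [set: M].

(* The <mu-box topology on D -> R, where mu = |D|: base sets
   [s] = {f | s ⊆ f} for partial s : D ⇀ R with |dom s| < mu. *)
Definition box_basic D R (S : set D) (s : D -> R) : set (D -> R) :=
  [set f | forall i, S i -> f i = s i].

Definition box_open D R (U : set (D -> R)) : Prop :=
  forall f, U f -> exists S : set D, exists s : D -> R,
    card_lt S [set: D] /\ box_basic S s f /\ box_basic S s `<=` U.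

Definition homeomorphic X Y (openX : set X -> Prop) (openY : set Y -> Prop) : Prop :=
  exists (h : X -> Y) (g : Y -> X),
    cancel h g /\ cancel g h /\
    (forall V, openY V -> openX (h @^-1` V)) /\
    (forall U, openX U -> openY (g @^-1` U)).

(* Main.v *)
Require Import Defs.
From mathcomp Require Import all_boot.
From mathcomp Require Import boolp classical_sets functions cardinality.
Set Implicit Arguments. Unset Strict Implicit. Unset Printing Implicit Defensive.
Local Open Scope classical_set_scope.
Local Open Scope card_scope.

Lemma le_fun T U (A : set T) (B : set U) : A #<= B ->
  A = set0 \/ exists f : T -> U, (forall x, A x -> B (f x)) /\
     (forall x y, A x -> A y -> f x = f y -> x = y).
Proof.
move=> /card_leP[g].
have [[x0 Ax0]|nA] := pselect (exists x, A x); last first.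
  by left; apply/seteqP; split=> // x Ax; apply: nA; exists x.
right.
pose u0 := val (g (SigSub (mem_set Ax0))).
pose f x := if pselect (A x) is left h then val (g (SigSub (mem_set h))) else u0.
exists f; split.
  move=> x Ax; rewrite /f; case: pselect => // h.
  by apply: set_mem; apply: valP.
move=> x y Ax Ay; rewrite /f; case: pselect => // hx; case: pselect => // hy.
move=> /val_inj/(@inj _ _ _ g) h.
have := congr1 val (h (mem_set I) (mem_set I)); done.
Qed.

Lemma eq_fun T U (A : set T) (B : set U) : A #= B ->
  A = set0 \/ exists f : T -> U, set_bij A B f.
Proof.
move=> /card_bijP[g gbij].
have [[x0 Ax0]|nA] := pselect (exists x, A x); last first.
  by left; apply/seteqP; split=> // x Ax; apply: nA; exists x.
right.
case: gbij => g' gK g'K.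
pose u0 := val (g (SigSub (mem_set Ax0))).
pose f x := if pselect (A x) is left h then val (g (SigSub (mem_set h))) else u0.
exists f; split.
- move=> x Ax; rewrite /f; case: pselect => // h.
  by apply: set_mem; apply: valP.
- move=> x y /set_mem Ax /set_mem Ay; rewrite /f; case: pselect => // hx; case: pselect => // hy.
  move=> /val_inj/(can_inj gK) h.
  by have := congr1 val h.
- move=> z Bz; exists (val (g' (SigSub (mem_set Bz)))).
    by apply: set_mem; apply: valP.
  rewrite /f; case: pselect => h; last by exfalso; apply: h; apply: set_mem; apply: valP.
  have -> : SigSub (mem_set h) = g' (SigSub (mem_set Bz)) by apply: val_inj.
  by rewrite g'K.
Qed.
Lemma inj_le T U (A : set T) (B : set U) (f : T -> U) :
  (forall x, A x -> B (f x)) -> (forall x y, A x -> A y -> f x = f y -> x = y) ->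
  A #<= B.
Proof.
move=> fAB finj.
have e : f @` A #= A.
  apply: inj_card_eq => x y /set_mem xA /set_mem yA; exact: finj.
apply: (@card_le_trans _ _ _ (f @` A)).
  by rewrite card_eq_le in e; case/andP: e.
by apply: subset_card_le => _ [x xA <-]; apply: fAB.
Qed.

Definition pinj T U (A : set T) (B : set U) (r : set (T * U)) :=
  [/\ forall p, r p -> A p.1 /\ B p.2,
      forall x y y', r (x, y) -> r (x, y') -> y = y' &
      forall x x' y, r (x, y) -> r (x', y) -> x = x'].

Lemma pinj_le T U (A : set T) (B : set U) (r : set (T * U)) :
  pinj A B r -> (forall x, A x -> exists y, r (x, y)) -> A #<= B.
Proof.
move=> [rAB rf ri] tot.
have [[x0 Ax0]|nA] := pselect (exists x, A x); last first.
  have -> : A = set0 by apply/seteqP; split=> // x Ax; apply: nA; exists x.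
  exact: card_ge0.
have [u0 _] := tot x0 Ax0.
pose f x := if pselect (exists y, r (x, y)) is left h then projT1 (cid h) else u0.
have fr x : A x -> r (x, f x).
  move=> Ax; rewrite /f; case: pselect => h; first exact: (projT2 (cid h)).
  by exfalso; apply: h; apply: tot.
apply: (@inj_le _ _ _ _ f).
  by move=> x /fr /rAB [].
move=> x y Ax Ay fxy; apply: (ri _ _ (f x)); first exact: fr.
by rewrite fxy; apply: fr.
Qed.

Lemma card_total T U (A : set T) (B : set U) : A #<= B \/ B #<= A.
Proof.
have [r [Pr rmax]] : exists r, pinj A B r /\ forall r', r `<` r' -> ~ pinj A B r'.
  apply: Zorn_bigcup => F FP Ftot; split.
  - by move=> p [X FX Xp]; have [h _ _] := FP X FX; exact: h.
  - move=> x y y' [X FX Xp] [X' FX' Xp'].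
    have [XX'|X'X] := Ftot X X' FX FX'.
      by have [_ h _] := FP X' FX'; apply: h (XX' _ Xp) Xp'.
    by have [_ h _] := FP X FX; apply: h Xp (X'X _ Xp').
  - move=> x x' y [X FX Xp] [X' FX' Xp'].
    have [XX'|X'X] := Ftot X X' FX FX'.
      by have [_ _ h] := FP X' FX'; apply: h (XX' _ Xp) Xp'.
    by have [_ _ h] := FP X FX; apply: h Xp (X'X _ Xp').
have [totA|] := pselect (forall x, A x -> exists y, r (x, y)).
  by left; apply: pinj_le Pr totA.
move=> /existsNP[x0 /not_implyP[Ax0 nx0]].
have [totB|] := pselect (forall y, B y -> exists x, r (x, y)).
  right; apply: (@pinj_le _ _ _ _ [set p | r (p.2, p.1)]).
    case: Pr => h1 h2 h3; split.
    - by move=> p /h1 [].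
    - by move=> x y y' h h'; apply: h3 h h'.
    - by move=> x x' y h h'; apply: h2 h h'.
  by move=> y /totB [x h]; exists x.
move=> /existsNP[y0 /not_implyP[By0 ny0]].
exfalso; apply: (rmax (r `|` [set (x0, y0)])).
  split; first by move=> p rp; left.
  move=> /(_ (x0, y0)) h; apply: nx0; exists y0; apply: h; by right.
case: Pr => h1 h2 h3; split.
- by move=> p [/h1 //|->].
- move=> x y y' [h|e] [h'|e'].
  + exact: h2 h h'.
  + by case: e' => ex _; exfalso; apply: nx0; exists y; rewrite -ex.
  + by case: e => ex _; exfalso; apply: nx0; exists y'; rewrite -ex.
  + by case: e => _ ->; case: e' => _ ->.
- move=> x x' y [h|e] [h'|e'].
  + exact: h3 h h'.
  + by case: e' => _ ey; exfalso; apply: ny0; exists x; rewrite -ey.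
  + by case: e => _ ey; exfalso; apply: ny0; exists x'; rewrite -ey.
  + by case: e => -> _; case: e' => -> _.
Qed.

Lemma prod_le T T' U U' (A : set T) (A' : set T') (B : set U) (B' : set U') :
  A #<= A' -> B #<= B' -> A `*` B #<= A' `*` B'.
Proof.
move=> /le_fun[->|[f [fA fi]]].
  by rewrite set0X => _; apply: card_ge0.
move=> /le_fun[->|[g [gB gi]]].
  by rewrite setX0; apply: card_ge0.
apply: (@inj_le _ _ _ _ (fun p => (f p.1, g p.2))).
  by move=> [x y] [/= Ax By]; split; [apply: fA | apply: gB].
move=> [x y] [x' y'] [/= Ax By] [/= Ax' By'] [e1 e2].
by rewrite (fi _ _ Ax Ax' e1) (gi _ _ By By' e2).
Qed.

Lemma le_setXbool T (C : set T) : C #<= C `*` [set: bool].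
Proof.
apply: (@inj_le _ _ _ _ (fun c => (c, true))); first by [].
by move=> x y _ _ [].
Qed.

Lemma union_le T U (A B : set T) (C : set U) :
  A #<= C -> B #<= C -> A `|` B #<= C `*` [set: bool].
Proof.
move=> hAC hBC; case/le_fun: (hAC) => [eA|[f [fA fi]]].
  by rewrite eA set0U; apply: card_le_trans hBC (le_setXbool _).
case/le_fun: (hBC) => [eB|[g [gB gi]]].
  by rewrite eB setU0; apply: card_le_trans hAC (le_setXbool _).
pose h x := if pselect (A x) is left _ then (f x, true) else (g x, false).
apply: (@inj_le _ _ _ _ h).
  move=> x ABx; rewrite /h; case: pselect => Ax; first by split=> //; apply: fA.
  by split => //; apply: gB; case: ABx.
move=> x y ABx ABy; rewrite /h; case: pselect => Ax; case: pselect => Ay //= [e].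
- exact: fi.
- by apply: gi => //; [case: ABx|case: ABy].
Qed.

Lemma infinite_le T U (A : set T) (B : set U) :
  A #<= B -> infinite_set A -> infinite_set B.
Proof. by move=> AB iA fB; apply: iA; apply: card_le_finite AB fB. Qed.

Lemma two_elts T (C : set T) : infinite_set C ->
  exists c1 c2, [/\ C c1, C c2 & c1 <> c2].
Proof.
move=> /infiniteP /le_fun [e|[e [eC ei]]].
  by exfalso; have := congr1 (fun S => S 0%N) e; rewrite /= => <-.
exists (e 0%N), (e 1%N); split; try exact: eC.
by move=> /ei h; have := h I I.
Qed.

Lemma bool_le T (C : set T) : infinite_set C -> C `*` [set: bool] #<= C `*` C.
Proof.
move=> /two_elts [c1 [c2 [C1 C2 c12]]].
apply: (@inj_le _ _ _ _ (fun p => (p.1, if p.2 then c1 else c2))).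
  by move=> [c b] [/= Cc _]; split => //=; case: b.
move=> [c b] [c' b'] _ _ /= [-> e]; congr pair.
by case: b b' e => [] [] // e; exfalso; apply: c12.
Qed.

Definition ran T (r : set ((T * T) * T)) : set T := [set z | exists q, r (q, z)].

Definition good T (A : set T) (r : set ((T * T) * T)) :=
  [/\ forall p, r p -> A p.2,
      forall q z z', r (q, z) -> r (q, z') -> z = z',
      forall q q' z, r (q, z) -> r (q', z) -> q = q' &
      forall a b, (exists z, r ((a, b), z)) <-> (ran r a /\ ran r b)].

Lemma good_le T (A : set T) r : good A r -> ran r `*` ran r #<= ran r.
Proof.
move=> [rA rf ri rd].
apply: (@pinj_le _ _ _ _ r); last by move=> [a b] /rd.
split.
- move=> [[a b] z] /= h; split; last by exists (a, b).
  by apply/rd; exists z.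
- exact: rf.
- exact: ri.
Qed.

Lemma graph_good T (A X : set T) (b : T * T -> T) :
  set_bij (X `*` X) X b -> X `<=` A ->
  good A [set p | (X `*` X) p.1 /\ p.2 = b p.1] /\
  ran [set p | (X `*` X) p.1 /\ p.2 = b p.1] = X.
Proof.
move=> [bf bi bs] XA.
have ranE : ran [set p | (X `*` X) p.1 /\ p.2 = b p.1] = X.
  apply/seteqP; split.
    by move=> z [q [/= Xq e]]; rewrite e; apply: bf.
  by move=> z Xz; have [q Xq e] := bs z Xz; exists q; split => //; rewrite e.
split=> //; split.
- by move=> [q z] [/= Xq e]; rewrite e; apply: XA; apply: bf.
- by move=> q z z' [_ /= ->] [_ /= ->].
- move=> q q' z [Xq /= e] [Xq' /= e']; apply: bi; [exact: mem_set | exact: mem_set |].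
  by rewrite -e -e'.
- move=> a c; rewrite ranE; split.
    by move=> [z [/= ? _]].
  by move=> [Xa Xc]; exists (b (a, c)).
Qed.

Lemma countable_sub T (A : set T) : infinite_set A ->
  exists N : set T, [/\ N `<=` A, infinite_set N & N `*` N #= N].
Proof.
move=> /infiniteP /le_fun [e|[e [eA ei]]].
  by exfalso; have := congr1 (fun S => S 0%N) e; rewrite /= => <-.
pose N := e @` [set: nat].
have Nnat : [set: nat] #<= N.
  apply: (@inj_le _ _ _ _ e); first by move=> n _; exists n.
  by move=> x y _ _ /ei; apply.
have natN : N #<= [set: nat] by apply: card_image_le.
exists N; split.
- by move=> _ [n _ <-]; apply: eA.
- by apply/infiniteP.
- apply: Cantor_Bernstein.
    apply: card_le_trans (prod_le natN natN) _.
    rewrite setXTT; apply: card_le_trans Nnat.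
    exact: countableP.
  apply: (@inj_le _ _ _ _ (fun x => (x, x))); first by [].
  by move=> x y _ _ [].
Qed.

Lemma hessenberg T (A : set T) : infinite_set A -> A `*` A #<= A.
Proof.
move=> Ainf.
have [N [NA Ninf NN]] := countable_sub Ainf.
have N0 : exists n, N n.
  by apply: contrapT => nN; apply: Ninf; have -> : N = set0 by
    apply/seteqP; split=> // x Nx; apply: nN; exists x.
have [[n0 Nn0] _] := (N0, tt).
have [eN|[b bb]] := eq_fun NN.
  by exfalso; have := congr1 (fun S => S (n0, n0)) eN; rewrite /= => <-.
pose r0 := [set p | (N `*` N) p.1 /\ p.2 = b p.1].
have [r0good r0ran] := graph_good bb NA.
pose P r := good A r /\ (r = set0 \/ r0 `<=` r).
have [r [[rgood r0r] rmax]] : exists r, P r /\ forall r', r `<` r' -> ~ P r'.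
  apply: Zorn_bigcup => F FP Ftot.
  set U := \bigcup_(X in F) X.
  have ranU c : ran U c <-> exists2 X, F X & ran X c.
    split; first by move=> [q [X FX Xq]]; exists X => //; exists q.
    by move=> [X FX [q Xq]]; exists q; exists X.
  split; first split.
  - by move=> p [X FX Xp]; have [[h _ _ _] _] := FP X FX; exact: h.
  - move=> q z z' [X FX Xp] [X' FX' Xp'].
    have [XX'|X'X] := Ftot X X' FX FX'.
      by have [[_ h _ _] _] := FP X' FX'; apply: h (XX' _ Xp) Xp'.
    by have [[_ h _ _] _] := FP X FX; apply: h Xp (X'X _ Xp').
  - move=> q q' z [X FX Xp] [X' FX' Xp'].
    have [XX'|X'X] := Ftot X X' FX FX'.
      by have [[_ _ h _] _] := FP X' FX'; apply: h (XX' _ Xp) Xp'.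
    by have [[_ _ h _] _] := FP X FX; apply: h Xp (X'X _ Xp').
  - move=> a c; split.
      move=> [z [X FX Xp]].
      have [[_ _ _ h] _] := FP X FX.
      have [[q1 h1] [q2 h2]] : ran X a /\ ran X c by apply/h; exists z.
      by split; [exists q1 | exists q2]; exists X.
    move=> [/ranU [X1 FX1 [q1 h1]] /ranU [X2 FX2 [q2 h2]]].
    have [X [FX [X1X X2X]]] : exists X, F X /\ X1 `<=` X /\ X2 `<=` X.
      have [h|h] := Ftot X1 X2 FX1 FX2.
        by exists X2; do 2 split => //.
      by exists X1; do 2 split => //.
    have [[_ _ _ h] _] := FP X FX.
    have [z Xz] : exists z, X ((a, c), z).
      by apply/h; split; [exists q1; apply: X1X | exists q2; apply: X2X].
    by exists z; exists X.
  - have [[X FX r0X]|nX] := pselect (exists2 X, F X & r0 `<=` X).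
      by right => p r0p; exists X => //; apply: r0X.
    left; apply/seteqP; split => // p [X FX Xp].
    have [_ [eX|r0X]] := FP X FX; first by rewrite eX in Xp.
    by exfalso; apply: nX; exists X.
have r0P : P r0 by split => //; right.
have b0 : r0 ((n0, n0), b (n0, n0)) by split.
have {r0r} r0r : r0 `<=` r.
  case: r0r => // er; exfalso; apply: (rmax r0) => //; rewrite er; split => //.
  by move=> /(_ _ b0).
case: rgood => rA rf ri rd.
set X := ran r.
have NX : N `<=` X.
  move=> n Nn; rewrite -r0ran in Nn; case: Nn => q h; exists q; exact: r0r.
have Xinf : infinite_set X := infinite_le (subset_card_le NX) Ninf.
have XA : X `<=` A by move=> z [q /rA].
have XXX : X `*` X #<= X := good_le (And4 rA rf ri rd).
have [XAX|AXX] := card_total X (A `\` X); last first.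
  have AX : A #<= X.
    apply: card_le_trans (card_le_trans (union_le (card_lexx X) AXX)
       (card_le_trans (bool_le Xinf) XXX)).
    apply: subset_card_le => x Ax.
    by have [Xx|nXx] := pselect (X x); [left|right].
  exact: card_le_trans (card_le_trans (prod_le AX AX) XXX) (subset_card_le XA).
exfalso.
case/le_fun: XAX => [eX|[e [eAX ei]]].
  by apply: Xinf; rewrite eX; apply: finite_set0.
pose Y := e @` X.
have YX : Y #<= X := card_image_le e X.
have XY : X #<= Y.
  apply: (@inj_le _ _ _ _ e); first by move=> x Xx; exists x.
  exact: ei.
have Yinf : infinite_set Y := infinite_le XY Xinf.
have YA : Y `<=` A by move=> _ [x Xx <-]; case: (eAX x Xx).
have YnX y : Y y -> ~ X y by case=> x Xx <-; case: (eAX x Xx).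
have YYY : Y `*` Y #<= Y := card_le_trans (prod_le YX YX) (card_le_trans XXX XY).
pose Z := X `|` Y.
have ZY : Z #<= Y := card_le_trans (union_le XY (card_lexx Y))
   (card_le_trans (bool_le Yinf) YYY).
pose D := (Z `*` Z) `\` (X `*` X).
have DY : D #<= Y.
  apply: card_le_trans (card_le_trans (prod_le ZY ZY) YYY).
  by apply: subset_card_le => p [].
have YD : Y #<= D.
  apply: (@inj_le _ _ _ _ (fun y => (y, y))); last by move=> x y _ _ [].
  by move=> y Yy; split; [split; right | move=> [/= /(YnX _ Yy)]].
have y0Y : Y (e n0) by exists n0 => //; apply: NX.
have Dy0 : D (e n0, e n0) by split; [split; right | move=> [/= /(YnX _ y0Y)]].
case: (eq_fun (Cantor_Bernstein DY YD)) => [eD|[g [gf gi gs]]].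
  by rewrite eD in Dy0.
pose r' := r `|` [set p | D p.1 /\ p.2 = g p.1].
have DnX a c : D (a, c) -> ~ (X a /\ X c) by move=> [_ h] [Xa Xc]; apply: h.
have rX a c z : r ((a, c), z) -> X a /\ X c by move=> h; apply/rd; exists z.
have ranr' c : ran r' c <-> Z c.
  split.
    move=> [q [h|[Dq /= e']]]; first by left; exists q.
    by right; rewrite e'; apply: gf.
  move=> [[q h]|Yc]; first by exists q; left.
  have [q Dq gq] := gs c Yc.
  by exists q; right; split => //=; rewrite gq.
apply: (rmax r').
  split; first by move=> p rp; left.
  move=> /(_ ((e n0, e n0), g (e n0, e n0))) h.
  have : r ((e n0, e n0), g (e n0, e n0)) by apply: h; right.
  by move=> /rX [/(YnX _ y0Y)].
split; last by right => p /r0r rp; left.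
split.
- move=> [q z] [/rA //|[Dq /= ->]]; apply: YA; exact: gf.
- move=> q z z' [h|[Dq /= e1]] [h'|[Dq' /= e2]].
  + exact: rf h h'.
  + by exfalso; case: q h Dq' e2 => a c /rX h1 h2 _; apply: DnX h2 h1.
  + by exfalso; case: q h' Dq e1 => a c /rX h1 h2 _; apply: DnX h2 h1.
  + by rewrite e1 e2.
- move=> q q' z [h|[Dq /= e1]] [h'|[Dq' /= e2]].
  + exact: ri h h'.
  + by exfalso; apply: (YnX (z)); [rewrite e2; apply: gf | exists q].
  + by exfalso; apply: (YnX (z)); [rewrite e1; apply: gf | exists q'].
  + by apply: gi => //; [exact: mem_set | exact: mem_set | rewrite -e1 -e2].
- move=> a c; split.
    move=> [z [/rX [Xa Xc]|[[/= [Za Zc] _] _]]].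
      by split; apply/ranr'; left.
    by split; apply/ranr'.
  move=> [/ranr' Za /ranr' Zc].
  have [[Xa Xc]|nXX] := pselect (X a /\ X c).
    have [z h] : exists z, r ((a, c), z) by apply/rd.
    by exists z; left.
  by exists (g (a, c)); right; split => //; split => //; split.
Qed.

Lemma card_lt_le T U V (A : set T) (B : set U) (C : set V) :
  A #<= B -> card_lt B C -> card_lt A C.
Proof.
move=> AB [BC nCB]; split; first exact: card_le_trans AB BC.
by move=> CA; apply: nCB; apply: card_le_trans CA AB.
Qed.

Lemma small_prod K M (S : set M) : card_lt [set: K] [set: M] ->
  infinite_set [set: K] -> card_lt S [set: M] ->
  card_lt (S `*` [set: K]) [set: M].
Proof.
move=> KM Kinf SM.
have [SK|KS] := card_total S [set: K].
  apply: card_lt_le KM.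
  exact: card_le_trans (prod_le SK (card_lexx _)) (hessenberg Kinf).
apply: card_lt_le SM.
have Sinf := infinite_le KS Kinf.
exact: card_le_trans (prod_le (card_lexx _) KS) (hessenberg Sinf).
Qed.

Definition Hmap M P X Y (phi : M -> M * P) (phi' : M * P -> M)
  (Psi : (P -> X) -> (P -> Y)) (f : M -> X) : M -> Y :=
  fun x => Psi (fun p => f (phi' ((phi x).1, p))) (phi x).2.

Lemma Hmap_cont M P X Y (phi : M -> M * P) (phi' : M * P -> M)
  (Psi : (P -> X) -> (P -> Y)) :
  cancel phi phi' -> cancel phi' phi ->
  (forall S : set M, card_lt S [set: M] -> card_lt (S `*` [set: P]) [set: M]) ->
  forall V, box_open V -> box_open (Hmap phi phi' Psi @^-1` V).
Proof.
move=> c1 c2 small V Vo f Vhf.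
have [S [s [Slt [hfS SV]]]] := Vo _ Vhf.
pose S1 := (fun y => (phi y).1) @` S.
exists [set x | S1 (phi x).1], f; split.
  apply: card_lt_le (small S1 (card_lt_le (card_image_le _ _) Slt)).
  apply: (@inj_le _ _ _ _ phi); first by move=> x h; split.
  by move=> x y _ _ /(can_inj c1).
split; first by [].
move=> f' f'S; apply: SV => i Si; rewrite -(hfS i Si) /Hmap.
congr (Psi _ _); apply: funext => p; apply: f'S.
by rewrite /= c2 /=; exists i.
Qed.

Lemma Hmap_cancel M P X Y (phi : M -> M * P) (phi' : M * P -> M)
  (Psi : (P -> X) -> (P -> Y)) (Psi' : (P -> Y) -> (P -> X)) :
  cancel phi phi' -> cancel phi' phi -> cancel Psi Psi' ->
  cancel (Hmap phi phi' Psi) (Hmap phi phi' Psi').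
Proof.
move=> c1 c2 cP f; apply: funext => x; rewrite /Hmap.
have -> : (fun p => Psi (fun p0 => f (phi' ((phi (phi' ((phi x).1, p))).1, p0)))
     (phi (phi' ((phi x).1, p))).2) = Psi (fun q => f (phi' ((phi x).1, q))).
  by apply: funext => p; rewrite c2.
by rewrite cP -surjective_pairing c1.
Qed.

Lemma bij_inv T U (f : T -> U) : set_bij setT setT f ->
  exists g, cancel f g /\ cancel g f.
Proof.
move=> [_ fi fs].
have ex y : {x | f x = y}.
  by apply: cid; have [x _ <-] := fs y I; exists x.
exists (fun y => projT1 (ex y)); split.
  move=> x; apply: fi; rewrite ?in_setT //.
  exact: (projT2 (ex (f x))).
by move=> y; apply: (projT2 (ex y)).
Qed.

Theorem mainTheorem6 (K : Type) (ltK : K -> K -> Prop)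
  (M : Type) (ltM : M -> M -> Prop) :
  regular_infinite_cardinal ltK ->
  is_cardinal ltM ->
  card_lt [set: K] [set: M] ->
  cf_is ltM K ->
  homeomorphic (@box_open M bool) (@box_open M K).
Proof.
move=> [_ [Kinf _]] _ KltM _.
have [k1 [k2 [_ _ k12]]] := two_elts Kinf.
have [KM _] := KltM.
have Minf := infinite_le KM Kinf.
have MKM : [set: M] `*` [set: K] #<= [set: M].
  exact: card_le_trans (prod_le (card_lexx _) KM) (hessenberg Minf).
have MMK : [set: M] #<= [set: M] `*` [set: K].
  apply: (@inj_le _ _ _ _ (fun m => (m, k1))); first by [].
  by move=> x y _ _ [].
have [eM|[phi phib]] := eq_fun (Cantor_Bernstein MMK MKM).
  by exfalso; apply: Minf; rewrite eM; apply: finite_set0.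
rewrite setXTT in phib.
have [phi' [c1 c2]] := bij_inv phib.
have KKK : [set: K] `*` [set: K] #<= [set: K] := hessenberg Kinf.
rewrite setXTT in KKK.
have [eK|[j [_ ji]]] := le_fun KKK.
  by exfalso; have := congr1 (fun S => S (k1, k1)) eK; rewrite /= => <-.
have le1 : [set: K -> bool] #<= [set: K -> K].
  apply: (@inj_le _ _ _ _ (fun u k => if u k then k1 else k2)); first by [].
  move=> u v _ _ e; apply: funext => k.
  have := congr1 (fun G => G k) e => /=.
  by case: (u k); case: (v k) => // h; exfalso; apply: k12.
have le2 : [set: K -> K] #<= [set: K -> bool].
  apply: (@inj_le _ _ _ _ (fun u k => `[< exists x, j (x, u x) = k >])); first by [].
  move=> u v _ _ e; apply: funext => x.
  have : exists x', j (x', v x') = j (x, u x).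
    apply/asboolP; have := congr1 (fun G => G (j (x, u x))) e => /= <-.
    by apply/asboolP; exists x.
  by move=> [x' e']; case: (ji _ _ I I e') => ex evx; rewrite -evx ex.
have [eF|[psi psib]] := eq_fun (Cantor_Bernstein le1 le2).
  by exfalso; have := congr1 (fun S => S (fun _ => true)) eF; rewrite /= => <-.
have [psi' [d1 d2]] := bij_inv psib.
have small : forall S : set M, card_lt S [set: M] -> card_lt (S `*` [set: K]) [set: M].
  by move=> S; apply: small_prod.
exists (Hmap phi phi' psi), (Hmap phi phi' psi'); split.
- exact: Hmap_cancel.
- split; first exact: Hmap_cancel.
  split; exact: Hmap_cont.
Qed.
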